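(* Let $n\ge1$ and let $\tilde d_1$ be a metric on $\mathbb R^n$ for which there exists a continuous function $f:[0,\infty)\to[0,\infty)$ with $f(1)=1$ and $\tilde d_1(ax,x)=f(|ax-x|)$ for all $x\in\mathbb R^n$ and all $a\ge0$. Then the following are equivalent: (i) $\tilde d_1=d_1$; (ii) $\mathcal C_{\tilde d_1}(P_1,P_2)=\mathcal C_{d_1}(P_1,P_2)$ for all $P_1,P_2\in\mathbb R^n$.
   Context: $|\cdot|$ is the Euclidean norm. The radial metric $d_1$ on $\mathbb R^n$ is $d_1(A,B)=|A-B|$ if $A=aB$ for some $a\in\mathbb R$, and $d_1(A,B)=|A|+|B|$ otherwise. For a metric $d$ on a set $M$ and $A,B\in M$, $\mathcal C_d(A,B)=\{X\in M:\ d(X,A)=d(X,B)+d(A,B)<+\infty\}$. *)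

(* Defs.v *)
From HB Require Import structures.
From mathcomp Require Import all_boot all_order all_algebra.
From mathcomp Require Import all_classical all_reals all_analysis.
Set Implicit Arguments. Unset Strict Implicit. Unset Printing Implicit Defensive.
Import Order.TTheory GRing.Theory Num.Theory.
Local Open Scope ring_scope.
Local Open Scope classical_set_scope.

Definition enorm (R : realType) (n : nat) (x : 'rV[R]_n) : R :=
  Num.sqrt (\sum_(i < n) x ord0 i ^+ 2).

Definition is_metric (R : realType) (M : Type) (d : M -> M -> R) : Prop :=
  [/\ forall x y, d x y = 0 <-> x = y,
      forall x y, d x y = d y x &
      forall x y z, d x z <= d x y + d y z].

Definition d1 (R : realType) (n : nat) (A B : 'rV[R]_n) : R :=
  if `[< exists a : R, A = a *: B >] then enorm (A - B) else enorm A + enorm B.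

(* C_d(A,B) = {X : d(X,A) = d(X,B) + d(A,B) < +oo}; finiteness is automatic
   for real-valued metrics *)
Definition Cd (R : realType) (M : Type) (d : M -> M -> R) (A B : M) : set M :=
  [set X | d X A = d X B + d A B].

(* Main.v *)
Require Import Defs.
From HB Require Import structures.
From mathcomp Require Import all_boot all_order all_algebra.
From mathcomp Require Import all_classical all_reals all_analysis.
From mathcomp Require Import lra.
Import Order.TTheory GRing.Theory Num.Theory numFieldNormedType.Exports.
Local Open Scope ring_scope.
Local Open Scope classical_set_scope.

Section Aux.
Variables (R : realType) (n : nat).
Implicit Types (x y : 'rV[R]_n).

Lemma enormZ (a : R) x : enorm (a *: x) = `|a| * enorm x.
Proof.
rewrite /enorm.
under eq_bigr => i _ do rewrite mxE exprMn.
by rewrite -mulr_sumr sqrtrM ?sqr_ge0 // sqrtr_sqr.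
Qed.

Lemma enormN x : enorm (- x) = enorm x.
Proof. by rewrite -scaleN1r enormZ normrN normr1 mul1r. Qed.

Lemma enorm0 : enorm (0 : 'rV[R]_n) = 0.
Proof. by rewrite -(scale0r (0 : 'rV[R]_n)) enormZ normr0 mul0r. Qed.

Lemma enorm_ge0 x : 0 <= enorm x.
Proof. exact: sqrtr_ge0. Qed.

Lemma d1_coll x y (a : R) : x = a *: y -> d1 x y = enorm (x - y).
Proof. by move=> h; rewrite /d1; case: asboolP => // -[]; exists a. Qed.

Lemma d1_ncoll x y : (forall a : R, x <> a *: y) -> d1 x y = enorm x + enorm y.
Proof. by move=> h; rewrite /d1; case: asboolP => // -[a /h]. Qed.

Lemma d1_x0 x : d1 x 0 = enorm x.
Proof.
have [->|nx] := eqVneq x 0.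
  by rewrite (@d1_coll _ _ 0) ?scaler0 // subr0.
rewrite d1_ncoll ?enorm0 ?addr0 // => a; rewrite scaler0; exact/eqP.
Qed.

Lemma d1_0x x : d1 0 x = enorm x.
Proof. by rewrite (@d1_coll _ _ 0) ?scale0r // sub0r enormN. Qed.

End Aux.

Theorem theorem3p2 (R : realType) (n : nat) (hn : (0 < n)%N)
  (dt : 'rV[R]_n -> 'rV[R]_n -> R) (f : R -> R) :
  is_metric dt ->
  {within [set t : R | 0 <= t], continuous f} ->
  (forall t : R, 0 <= t -> 0 <= f t) ->
  f 1 = 1 ->
  (forall (x : 'rV[R]_n) (a : R), 0 <= a -> dt (a *: x) x = f (enorm (a *: x - x))) ->
  (dt = @d1 R n <-> forall P1 P2 : 'rV[R]_n, Cd dt P1 P2 = Cd (@d1 R n) P1 P2).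
Proof.
move=> [dt0 dtC dtT] _ fge0 f1 hf; split; first by move->.
move=> HC.
have HCd : forall X P1 P2, d1 X P1 = d1 X P2 + d1 P1 P2 ->
    dt X P1 = dt X P2 + dt P1 P2.
  move=> X P1 P2 h.
  have : (Cd (@d1 R n) P1 P2) X by exact: h.
  by rewrite -HC.
have dt0x : forall x, dt 0 x = f (enorm x).
  move=> x; have := hf x 0 (lexx _).
  by rewrite scale0r sub0r enormN.
have f0 : f 0 = 0.
  by rewrite -{1}(enorm0 R n) -dt0x; exact: (proj2 (dt0 0 0) erefl).
pose X0 : 'rV[R]_n := const_mx 1.
have nX0 : 0 < enorm X0.
  rewrite /enorm sqrtr_gt0.
  under eq_bigr => i _ do rewrite mxE expr1n.
  by rewrite sumr_const card_ord ltr0n.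
pose U := (enorm X0)^-1 *: X0.
have nU : enorm U = 1.
  by rewrite enormZ ger0_norm ?invr_ge0 ?ltW // mulVf // gt_eqF.
have fadd : forall u s, 0 <= u -> 0 < s -> f (u + s) = f u + f s.
  move=> u s u0 s0.
  pose X := s *: U; pose a := 1 + u / s.
  have nX : enorm X = s by rewrite enormZ nU mulr1 gtr0_norm.
  have a0 : 0 <= a - 1 by rewrite addrC addKr divr_ge0 // ltW.
  have a1 : 0 <= a by rewrite -[a](subrK 1) addr_ge0.
  have aX : enorm (a *: X) = u + s.
    by rewrite enormZ nX ger0_norm // mulrDl mul1r mulfVK ?gt_eqF // addrC.
  have aXX : enorm (a *: X - X) = u.
    by rewrite -{2}(scale1r X) -scalerBl enormZ ger0_norm // nX
      addrC addKr mulfVK ?gt_eqF.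
  have Xn0 : X != 0.
    by apply/eqP => h; move: nX; rewrite h enorm0 => h'; move: s0; rewrite -h' ltxx.
  have := HCd (a *: X) 0 X.
  rewrite d1_x0 (@d1_coll _ _ _ _ a) // d1_0x aX aXX nX.
  move=> /(_ erefl).
  by rewrite dtC dt0x aX hf // aXX dt0x nX.
have fmono : forall u v, 0 <= u -> u <= v -> f u <= f v.
  move=> u v u0 uv; have [<-//|uv'] := eqVneq u v.
  have -> : v = u + (v - u) by rewrite addrC subrK.
  rewrite fadd // ?subr_gt0 ?lt_neqAle ?uv' //.
  by rewrite lerDl fge0 // subr_ge0.
have fnat : forall (k : nat) s, 0 < s -> f (k%:R * s) = k%:R * f s.
  move=> k s s0; elim: k => [|k IH]; first by rewrite !mul0r f0.
  by rewrite -addn1 natrD !mulrDl !mul1r fadd // ?IH // mulr_ge0 // ltW.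
have finv : forall m : nat, (0 < m)%N -> f (m%:R^-1) = m%:R^-1.
  move=> m m0.
  have mR : (m%:R : R) != 0 by rewrite pnatr_eq0 -lt0n.
  have := fnat m (m%:R^-1) ltac:(by rewrite invr_gt0 ltr0n).
  rewrite mulfV // f1 => /(congr1 (fun z => m%:R^-1 * z)).
  by rewrite mulr1 mulKf // => <-.
have frat : forall (k m : nat), (0 < m)%N -> f (k%:R / m%:R) = k%:R / m%:R.
  move=> k m m0; rewrite fnat ?finv //.
  by rewrite invr_gt0 ltr0n.
have fid : forall t, 0 <= t -> f t = t.
  move=> t t0.
  have bound : forall m : nat, (0 < m)%N -> `|f t - t| <= m%:R^-1.
    move=> m m0.
    have mR : (0 : R) < m%:R by rewrite ltr0n.
    pose k := Num.truncn (t * m%:R).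
    have k1 : k%:R <= t * m%:R by rewrite truncn_le mulr_ge0 // ltW.
    have k2 : t * m%:R < k.+1%:R by apply: truncnS_gt.
    have l1 : k%:R / m%:R <= t by rewrite ler_pdivrMr.
    have l2 : t <= k.+1%:R / m%:R by rewrite ler_pdivlMr // ltW.
    have g1 : k%:R / m%:R <= f t.
      by rewrite -frat // fmono // divr_ge0 // ltW.
    have g2 : f t <= k.+1%:R / m%:R by rewrite -frat // fmono.
    have e : k.+1%:R / m%:R = k%:R / m%:R + m%:R^-1 :> R.
      by rewrite -addn1 natrD mulrDl mul1r.
    rewrite e in l2 g2.
    rewrite ler_norml; apply/andP; split; lra.
  apply/eqP; rewrite -subr_eq0 -normr_eq0; apply/eqP.
  apply/eqP; rewrite eq_le normr_ge0 andbT; apply/negP => /negP.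
  rewrite -ltNge => d0.
  pose m := (Num.truncn (`|f t - t|^-1)).+1.
  have := bound m erefl.
  apply/negP; rewrite -ltNge.
  rewrite -[X in _ < X]invrK ltf_pV2 ?posrE ?invr_gt0 ?ltr0n //.
  apply: truncnS_gt.
apply/funext => X; apply/funext => Y.
have dtx0 : forall x, dt x 0 = enorm x by move=> x; rewrite dtC dt0x fid ?enorm_ge0.
have G : d1 X Y = enorm X + enorm Y -> dt X Y = d1 X Y.
  move=> h; have := HCd X Y 0; rewrite !d1_x0 h => /(_ erefl).
  by rewrite !dtx0 => ->.
have [[a hXY]|nc] := pselect (exists a : R, X = a *: Y); last first.
  apply: G; apply: d1_ncoll => a hXY; apply: nc; by exists a.
have Hd := @d1_coll _ _ _ _ a hXY.
subst X.
have [a0|a0] := leP 0 a.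
  by rewrite Hd hf // fid ?enorm_ge0.
apply: G; rewrite Hd.
have -> : a *: Y - Y = (a - 1) *: Y by rewrite scalerBl scale1r.
rewrite !enormZ.
have h1 : a - 1 < 0 by lra.
rewrite (ltr0_norm h1) (ltr0_norm a0).
lra.
Qed.
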